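(* Let $D$ be a quasilocal API-domain with quotient field $K$ and let $L$ be a subfield of $K$. Then $D\cap L$ is a quasilocal API-domain.
   Context: An API-domain is an integral domain in which for every nonempty subset $\{d_\alpha\}$ of nonzero elements there is a natural number $n$ with the ideal generated by $\{d_\alpha^n\}$ principal. Quasilocal: unique maximal ideal. *)

(* Defs.v *)
(* Integral domains are modeled as subrings of a field K,
   given by (Prop-valued) predicates on K. *)
From mathcomp Require Import all_boot all_algebra.
Set Implicit Arguments. Unset Strict Implicit. Unset Printing Implicit Defensive.
Import GRing.Theory.
Local Open Scope ring_scope.

Section Defs.
Variable K : fieldType.

Definition is_subring (S : K -> Prop) : Prop :=
  [/\ S 0, S 1, (forall x y, S x -> S y -> S (x - y))
    & (forall x y, S x -> S y -> S (x * y))].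

Definition is_subfield (L : K -> Prop) : Prop :=
  is_subring L /\ (forall x, L x -> x != 0 -> L x^-1).

Definition is_quotient_field (D : K -> Prop) : Prop :=
  forall x : K, exists a b, [/\ D a, D b, b != 0 & x = a / b].

Definition in_ideal_gen (S A : K -> Prop) (x : K) : Prop :=
  exists s : seq (K * K),
    (forall p, p \in s -> S p.1 /\ A p.2) /\
    x = \sum_(p <- s) p.1 * p.2.

Definition principal_in (S I : K -> Prop) : Prop :=
  exists g, S g /\ forall x, I x <-> exists r, S r /\ x = r * g.

Definition API_domain (S : K -> Prop) : Prop :=
  forall A : K -> Prop, (exists a, A a) -> (forall a, A a -> S a /\ a != 0) ->
    exists n : nat, (0 < n)%N /\
      principal_in S (in_ideal_gen S (fun y => exists d, A d /\ y = d ^+ n)).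

Definition is_ideal (S I : K -> Prop) : Prop :=
  [/\ (forall x, I x -> S x), I 0, (forall x y, I x -> I y -> I (x + y))
    & (forall r x, S r -> I x -> I (r * x))].

Definition is_maximal_ideal (S M : K -> Prop) : Prop :=
  [/\ is_ideal S M, ~ M 1 &
    forall J, is_ideal S J -> (forall x, M x -> J x) ->
      (forall x, J x <-> M x) \/ J 1].

Definition quasilocal (S : K -> Prop) : Prop :=
  exists M, is_maximal_ideal S M /\
    forall M', is_maximal_ideal S M' -> forall x, M' x <-> M x.

End Defs.

(* Main.v *)
Require Import Defs.
From mathcomp Require Import all_boot all_algebra.
From mathcomp Require Import classical_sets.
From Stdlib Require Import Classical.
Set Implicit Arguments. Unset Strict Implicit. Unset Printing Implicit Defensive.
Import GRing.Theory.

Section Helpers.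
Local Open Scope ring_scope.
Variable K : fieldType.

Lemma subrD' (S : K -> Prop) : is_subring S -> forall x y, S x -> S y -> S (x + y).
Proof.
move=> [S0 S1 SB SM] x y Sx Sy.
have -> : x + y = x - (0 - y) by rewrite sub0r opprK.
by apply: (SB) => //; apply: (SB).
Qed.

Lemma subr_sum (S : K -> Prop) (T : eqType) (s : seq T) (f : T -> K) :
  is_subring S -> (forall p, p \in s -> S (f p)) -> S (\sum_(p <- s) f p).
Proof.
move=> HS; elim: s => [|a s IH] H; first by rewrite big_nil; case: HS.
rewrite big_cons; apply: subrD' => //; first by apply: H; rewrite inE eqxx.
by apply: IH => p Hp; apply: H; rewrite inE Hp orbT.
Qed.

Lemma ideal_sum (S I : K -> Prop) (T : eqType) (s : seq T) (f : T -> K) :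
  is_ideal S I -> (forall p, p \in s -> I (f p)) -> I (\sum_(p <- s) f p).
Proof.
move=> HI; elim: s => [|a s IH] H; first by rewrite big_nil; case: HI.
rewrite big_cons; case: HI => _ _ IA _; apply: IA; first by apply: H; rewrite inE eqxx.
by apply: IH => p Hp; apply: H; rewrite inE Hp orbT.
Qed.

Lemma unit_notM (D M : K -> Prop) : is_subring D -> is_maximal_ideal D M ->
  (forall M', is_maximal_ideal D M' -> forall x, M' x <-> M x) ->
  forall x, D x -> ~ M x -> D x^-1.
Proof.
move=> HD [[MD M0 MA MM] nM1 Mmax] Muniq x Dx nMx.
have [D0 D1 DB DM] := HD.
apply: NNPP => nDxi.
have x0 : x != 0 by apply/eqP => x0; apply: nMx; rewrite x0.
pose P := fun J : K -> Prop => [/\ (forall y, J y -> D y), ~ J 1,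
  (forall y z, J y -> J z -> J (y+z)), (forall r y, D r -> J y -> J (r*y))
  & ((exists y, J y) -> J x)].
have xD : P (fun y => exists r, D r /\ y = r * x).
  split.
  - by move=> y [r [Dr ->]]; exact: DM.
  - move=> [r [Dr e]]; apply: nDxi.
    have -> : x^-1 = r by rewrite -[r](mulfK x0) -e mul1r.
    exact: Dr.
  - move=> _ _ [r [Dr ->]] [s [Ds ->]]; exists (r+s); split;
      [exact: subrD' | by rewrite mulrDl].
  - move=> t _ Dt [r [Dr ->]]; exists (t*r); split; [exact: DM | by rewrite mulrA].
  - by move=> _; exists 1; split; [done | rewrite mul1r].
have [A [PA Amax]] : exists A, P A /\ forall B, proper A B -> ~ P B.
  apply: Zorn_bigcup.
  move=> F FP Ftot; split.
  - move=> y [X FX Xy]; have [XD _ _ _ _] := FP X FX; exact: XD.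
  - move=> [X FX X1]; have [_ nX1 _ _ _] := FP X FX; exact: nX1 X1.
  - move=> y z [X FX Xy] [Y FY Yz]; case: (Ftot X Y FX FY) => [XY|YX].
    + exists Y => //; have [_ _ YA _ _] := FP Y FY; apply: YA => //; exact: XY.
    + exists X => //; have [_ _ XA _ _] := FP X FX; apply: XA => //; exact: YX.
  - move=> r y Dr [X FX Xy]; exists X => //; have [_ _ _ XM _] := FP X FX; exact: XM.
  - move=> [y [X FX Xy]]; exists X => //; have [_ _ _ _ Xx] := FP X FX; apply: Xx.
    by exists y.
have [AD nA1 AA AM Ax] := PA.
have Anon : exists y, A y.
  apply: NNPP => nA; apply: (Amax _ _ xD); split.
  - by move=> y Ay; exfalso; apply: nA; exists y.
  - move=> h; apply: nA; exists x; apply: h; exists 1; split => //; by rewrite mul1r.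
have Axx := Ax Anon.
have A0 : A 0 by rewrite -(mul0r x); apply: AM.
have maxA : is_maximal_ideal D A.
  split; [by rewrite /is_ideal; split | exact: nA1 | ].
  move=> J [JD J0 JA JM] AJ; case: (classic (J 1)) => J1; [by right | left].
  have PJ : P J by split => // _; apply: AJ.
  move=> y; split; last exact: AJ.
  move=> Jy; apply: NNPP => nAy; apply: (Amax J _ PJ); split; first exact: AJ.
  by move=> h; exact: nAy (h y Jy).
by apply: nMx; apply: (proj1 (Muniq _ maxA x)).
Qed.


Lemma subrX (S : K -> Prop) x n : is_subring S -> S x -> S (x ^+ n).
Proof.
move=> HS Sx; elim: n => [|n IH]; first by rewrite expr0; case: HS.
by rewrite exprS; case: HS => _ _ _ SM; apply: SM.
Qed.

Lemma E_subring (D L : K -> Prop) : is_subring D -> is_subring L ->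
  is_subring (fun x => D x /\ L x).
Proof.
move=> [D0 D1 DB DM] [L0 L1 LB LM]; split => //.
- by move=> x y [? ?] [? ?]; split; [apply: DB | apply: LB].
- by move=> x y [? ?] [? ?]; split; [apply: DM | apply: LM].
Qed.

Lemma ql_part (D L M : K -> Prop) : is_subring D -> is_subfield L ->
  is_maximal_ideal D M ->
  (forall M', is_maximal_ideal D M' -> forall x, M' x <-> M x) ->
  quasilocal (fun x => D x /\ L x).
Proof.
move=> HD [HL Linv] HM Mu.
have [[MD M0 MA MM] nM1 Mmax] := HM.
have [D0 D1 DB DM] := HD; have [L0 L1 LB LM] := HL.
have unitE : forall x, D x -> L x -> ~ M x -> D x^-1 /\ L x^-1.
  move=> x Dx Lx nMx; split; first exact: (unit_notM HD HM Mu Dx nMx).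
  apply: Linv => //; apply/eqP => x0; apply: nMx; by rewrite x0.
pose N := fun x => M x /\ L x.
have NI : is_ideal (fun x => D x /\ L x) N.
  split.
  - by move=> x [Mx Lx]; split => //; exact: MD.
  - by split.
  - move=> x y [Mx Lx] [My Ly]; split; [exact: MA | exact: (subrD' HL)].
  - move=> r x [Dr Lr] [Mx Lx]; split; [exact: MM | exact: LM].
have nN1 : ~ N 1 by case.
have Nmax : is_maximal_ideal (fun x => D x /\ L x) N.
  split => // J [JE J0 JA JM] NJ.
  case: (classic (forall x, J x -> N x)) => h.
  - by left => x; split; [exact: h | exact: NJ].
  - right; have [x nx] := not_all_ex_not _ _ h.
    have [Jx nNx] := imply_to_and _ _ nx; have [Dx Lx] := JE x Jx.
    have nMx : ~ M x by move=> Mx; apply: nNx.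
    have [Dxi Lxi] := unitE x Dx Lx nMx.
    have x0 : x != 0 by apply/eqP => x0; apply: nMx; rewrite x0.
    by rewrite -(mulVf x0); apply: JM.
exists N; split => // M' HM' x.
have [[M'E M'0 M'A M'M] nM'1 M'max] := HM'.
have sub : forall y, M' y -> N y.
  move=> y My; have [Dy Ly] := M'E y My; split => //; apply: NNPP => nMy.
  have [Dyi Lyi] := unitE y Dy Ly nMy; apply: nM'1.
  have y0 : y != 0 by apply/eqP => y0; apply: nMy; rewrite y0.
  by rewrite -(mulVf y0); apply: M'M.
case: (M'max N NI sub) => [h | h]; last by exfalso.
by split; [apply: sub | move=> Nx; exact: (h x).1 Nx].
Qed.

Lemma api_part (D L M : K -> Prop) : is_subring D -> is_subfield L ->
  is_maximal_ideal D M ->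
  (forall M', is_maximal_ideal D M' -> forall x, M' x <-> M x) ->
  API_domain D -> API_domain (fun x => D x /\ L x).
Proof.
move=> HD [HL Linv] HM Mu Hapi A [a0 Aa0] HA.
have [[MD M0 MA MM] nM1 Mmax] := HM.
have [D0 D1 DB DM] := HD; have [L0 L1 LB LM] := HL.
have HA' : forall a, A a -> D a /\ a != 0 by move=> a /HA [[Da _] a00].
have [n [n0 [g [Dg Hg]]]] := Hapi A (ex_intro _ a0 Aa0) HA'.
have Ing : forall y, (exists d, A d /\ y = d ^+ n) ->
    in_ideal_gen D (fun y => exists d, A d /\ y = d ^+ n) y.
  move=> y By; exists [:: (1, y)]; split.
  - by move=> p; rewrite inE => /eqP -> /=; split.
  - by rewrite big_cons big_nil mul1r addr0.
have g0 : g != 0.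
  have [r [_ e]] := (Hg _).1 (Ing _ (ex_intro _ a0 (conj Aa0 erefl))).
  apply/eqP => g0; have [_ a00] := HA' a0 Aa0.
  by move: e; rewrite g0 mulr0 => /eqP; rewrite expf_eq0 (negbTE a00) andbF.
have [s [Hs gs]] := (Hg g).2 (ex_intro _ 1 (conj D1 (esym (mul1r g)))).
have [p ps nMp] : exists2 p, p \in s & ~ M (p.1 * (p.2 / g)).
  apply: NNPP => hn; apply: nM1.
  have -> : 1 = \sum_(p <- s) p.1 * (p.2 / g).
    by rewrite -(divff g0) {1}gs mulr_suml; apply: eq_bigr => p _; rewrite mulrA.
  have MI : is_ideal D M by case: HM.
  apply: (ideal_sum MI) => q qs; apply: NNPP => nm; apply: hn; by exists q.
have [Dp1 [d [Ad e2]]] := Hs p ps.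
have Dt : D (p.2 / g).
  have [t [Dt et]] := (Hg p.2).1 (Ing _ (ex_intro _ d (conj Ad e2))).
  by rewrite et mulfK.
have nMt : ~ M (p.2 / g) := fun h => nMp (MM _ _ Dp1 h).
have Dti : D (g / p.2) by have := unit_notM HD HM Mu Dt nMt; rewrite invf_div.
have [[Dd Ld] d0] := HA d Ad.
have dn0 : d ^+ n != 0 by rewrite expf_neq0.
have key : forall a, A a -> D (a^+n / d^+n) /\ L (a^+n / d^+n).
  move=> a Aa; have [r [Dr er]] := (Hg _).1 (Ing _ (ex_intro _ a (conj Aa erefl))).
  have [[Da La] _] := HA a Aa.
  split.
  - rewrite er -e2 -mulrA; exact: DM.
  - apply: LM; first exact: subrX.
    by apply: Linv => //; exact: subrX.
have HE := E_subring HD HL.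
exists n; split => //; exists (d ^+ n); split.
  by split; apply: subrX.
move=> x; split.
- move=> [s' [Hs' ->]]; exists (\sum_(q <- s') q.1 * (q.2 / d^+n)); split.
  + apply: (subr_sum HE) => q qs.
    have [[Dq1 Lq1] [a [Aa ->]]] := Hs' q qs; have [Dk Lk] := key a Aa.
    by split; [apply: DM | apply: LM].
  + by rewrite mulr_suml; apply: eq_bigr => q _; rewrite -mulrA divfK.
- move=> [r [Er ->]]; exists [:: (r, d^+n)]; split.
  + by move=> q; rewrite inE => /eqP -> /=; split => //; exists d.
  + by rewrite big_cons big_nil addr0.
Qed.

End Helpers.

Theorem theorem4 (K : fieldType) (D L : K -> Prop) :
  is_subring D -> is_quotient_field D -> quasilocal D -> API_domain D ->
  is_subfield L ->
  quasilocal (fun x => D x /\ L x) /\ API_domain (fun x => D x /\ L x).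
Proof.
move=> HD _ [M [HM Mu]] Hapi HL; split.
- exact: (ql_part HD HL HM Mu).
- exact: (api_part HD HL HM Mu Hapi).
Qed.
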